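(* Assume the context distribution is stationary, i.e. $p(x,t)=p(x)p(t)$ on $\mathcal{X}\times[0,T]$ and the context distribution at the target time satisfies $p(x\mid t')=p(x)$. Suppose the logging policy $\pi_0$ satisfies common support for $\pi_e$ and $t'$, i.e. $\pi_e(a\mid x,t')>0 \implies \pi_0(a\mid x,t)>0$ for all $x\in\mathcal{X}$, $t\in[0,T]$, $a\in\mathcal{A}$, and that the time feature function $\phi$ satisfies $p(\phi(t'))>0$. Then the OPFV estimator has bias $$\mathrm{Bias}\big(\hat V^{\mathrm{OPFV}}_{t'}(\pi_e;\mathcal{D})\big)=\mathbb{E}_{p(x,t)\pi_e(a\mid x,t')}\left[\frac{\mathbb{I}_\phi(t,t')}{p(\phi(t'))}\Big(\Delta_q(x,t,t',a)-\Delta_{\hat f}(x,t,t',a)\Big)\right].$$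
   Context: Contexts $x\in\mathcal{X}$, a finite action set $\mathcal{A}$, continuous time $t$, and rewards $r\in[0,r_{\max}]$. The logged data $\mathcal{D}=\{(x_i,t_i,a_i,r_i)\}_{i=1}^n$ consists of $n$ i.i.d. draws with $(x,t)\sim p(x,t)$ supported on $\mathcal{X}\times[0,T]$ ($T>0$ the end of the logging window), $a\sim\pi_0(a\mid x,t)$ (logging policy), $r\sim p(r\mid x,t,a)$; the reward distributions $p(r\mid x,t,a)$ are defined for all times $t\ge 0$, including future times. Let $q(x,t,a)=\mathbb{E}[r\mid x,t,a]$. A target time $t'>T$ and an evaluation policy $\pi_e(a\mid x,t)$ are fixed; the future policy value is $V_{t'}(\pi_e)=\mathbb{E}_{p(x\mid t')\pi_e(a\mid x,t')}[q(x,t',a)]$. A time feature function is any map $\phi$ from times to a set of labels; $\mathbb{I}_\phi(t,t')=\mathbb{I}\{\phi(t)=\phi(t')\}$ and $p(\phi(t'))=\int_0^T p(s)\,\mathbb{I}_\phi(s,t')\,ds$, where $p(t)$ is the marginal density of $t$. $\hat f:\mathcal{X}\times[0,\infty)\times\mathcal{A}\to\mathbb{R}$ is a fixed (non-random) reward regressor. The OPFV estimator is $$\hat V^{\mathrm{OPFV}}_{t'}(\pi_e;\mathcal{D})=\frac1n\sum_{i=1}^n\left\{\frac{\mathbb{I}_\phi(t_i,t')}{p(\phi(t'))}\frac{\pi_e(a_i\mid x_i,t')}{\pi_0(a_i\mid x_i,t_i)}\big(r_i-\hat f(x_i,t_i,a_i)\big)+\mathbb{E}_{\pi_e(a\mid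 x_i,t')}[\hat f(x_i,t',a)]\right\}.$$ $\mathrm{Bias}(\hat V)=\mathbb{E}_{\mathcal{D}}[\hat V]-V_{t'}(\pi_e)$. $\Delta_q(x,t,t',a)=q(x,t,a)-q(x,t',a)$ and $\Delta_{\hat f}(x,t,t',a)=\hat f(x,t,a)-\hat f(x,t',a)$. *)

(* Defs.v *)
From HB Require Import structures.
From mathcomp Require Import all_boot all_order all_algebra.
From mathcomp Require Import all_classical all_reals all_analysis.

Set Implicit Arguments.
Unset Strict Implicit.
Unset Printing Implicit Defensive.

Import Order.TTheory GRing.Theory Num.Theory.
Import numFieldNormedType.Exports.

Local Open Scope classical_set_scope.
Local Open Scope ring_scope.

Section OPFV.
Context {R : realType} {dX : measure_display} {Xs : measurableType dX}
        {A : finType} {L : eqType}.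

(* A logged sample (x, t, a, r). *)
Definition sample := (Xs * R * A * R)%type.

Definition Iphi (phi : R -> L) (t t' : R) : R := (phi t == phi t')%:R.

Definition pphi (pt : R -> R) (T : R) (phi : R -> L) (t' : R) : R :=
  \int[lebesgue_measure]_(s in `[0, T]) (pt s * Iphi phi s t').

(* q(x,t,a) = E[r | x,t,a] for the reward kernel kappa x t a = p(r | x,t,a) *)
Definition qmean (kappa : Xs -> R -> A -> probability R R) (x : Xs) (t : R) (a : A) : R :=
  \int[kappa x t a]_(r in [set: R]) r.

(* Expectation of g(x,t,a,r) for one logged draw:
   (x,t) ~ pxt, a ~ pi0(.|x,t), r ~ p(r|x,t,a). *)
Definition E_sample (pxt : probability (Xs * R)%type R) (pi0 : Xs -> R -> A -> R)
    (kappa : Xs -> R -> A -> probability R R) (g : sample -> R) : R :=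
  \int[pxt]_(xt in [set: (Xs * R)%type])
     (\sum_(a : A) pi0 xt.1 xt.2 a *
        \int[kappa xt.1 xt.2 a]_(r in [set: R]) g (xt.1, xt.2, a, r)).

(* Expectation over a dataset D of n i.i.d. draws (iterated integration over
   the n-fold product of the single-draw distribution). *)
Fixpoint E_data (pxt : probability (Xs * R)%type R) (pi0 : Xs -> R -> A -> R)
    (kappa : Xs -> R -> A -> probability R R) (n : nat) (G : seq sample -> R) : R :=
  match n with
  | 0%N => G [::]
  | n'.+1 => E_sample pxt pi0 kappa
               (fun s => E_data pxt pi0 kappa n' (fun D => G (s :: D)))
  end.

Definition opfv_term (pt : R -> R) (T : R) (phi : R -> L) (t' : R)
    (pi0 pie : Xs -> R -> A -> R) (fhat : Xs -> R -> A -> R) (s : sample) : R :=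
  let: (x, t, a, r) := s in
  Iphi phi t t' / pphi pt T phi t' * (pie x t' a / pi0 x t a) * (r - fhat x t a)
  + \sum_(b : A) pie x t' b * fhat x t' b.

Definition V_opfv (pt : R -> R) (T : R) (phi : R -> L) (t' : R)
    (pi0 pie : Xs -> R -> A -> R) (fhat : Xs -> R -> A -> R) (D : seq sample) : R :=
  (size D)%:R^-1 * \sum_(s <- D) opfv_term pt T phi t' pi0 pie fhat s.

(* Future policy value V_{t'}(pi_e) = E_{p(x|t') pi_e(a|x,t')}[q(x,t',a)]. *)
Definition V_true (pxt' : probability Xs R) (pie : Xs -> R -> A -> R)
    (kappa : Xs -> R -> A -> probability R R) (t' : R) : R :=
  \int[pxt']_(x in [set: Xs]) (\sum_(a : A) pie x t' a * qmean kappa x t' a).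

End OPFV.

(* Main.v *)
Require Import Defs.
From HB Require Import structures.
From mathcomp Require Import all_boot all_order all_algebra.
From mathcomp Require Import all_classical all_reals all_analysis.
From mathcomp Require Import measurable_realfun.
Import Order.TTheory GRing.Theory Num.Theory.
Import numFieldNormedType.Exports.
Local Open Scope classical_set_scope.
Local Open Scope ring_scope.
From mathcomp Require Import ring.
Set Implicit Arguments. Unset Strict Implicit.
Import HBNNSimple.
Lemma ae_le_nm d (T : measurableType d) (R : realType) (mu : {measure set T -> \bar R})
  (N : set T) (F G : T -> \bar R) : measurable N -> mu N = 0%E ->
  (forall x, (0 <= F x)%E) -> (forall x, (0 <= G x)%E) ->
  (forall x, ~ N x -> F x = G x) -> (\int[mu]_x F x <= \int[mu]_x G x)%E.
Proof.
move=> mN muN F0 G0 FG.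
rewrite (ge0_integralTE mu F0) (ge0_integralTE mu G0).
apply: ge_ereal_sup => _ [h hF <-].
have mNC : measurable (~` N) by exact: measurableC.
apply: ereal_sup_ubound; exists (proj_nnsfun h mNC).
  move=> x /=; rewrite /measurable_realfun.mindic indicE; have [Nx|Nx] := pselect (N x).
    have -> : (x \in ~` N) = false by apply/negbTE; rewrite notin_setE.
    by rewrite mulr0.
  rewrite mem_set // mulr1 -FG //.
have hT (k : {nnsfun T >-> R}) : sintegral mu k = (\int[mu]_x (k x)%:E)%E.
  by rewrite integral_nnsfun // patch_setT.
rewrite !hT; apply: ae_eq_integral => //.
- exact/measurable_EFinP.
- exact/measurable_EFinP.
exists N; split => // x /= /not_implyP[_] hx; apply: contrapT => Nx; apply: hx.
by rewrite /measurable_realfun.mindic indicE mem_set // mulr1.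
Qed.

Lemma ae_eq_nm d (T : measurableType d) (R : realType) (mu : {measure set T -> \bar R})
  (N : set T) (f g : T -> \bar R) : measurable N -> mu N = 0%E ->
  (forall x, ~ N x -> f x = g x) -> (\int[mu]_x f x = \int[mu]_x g x)%E.
Proof.
move=> mN muN fg; rewrite integralE [RHS]integralE.
have hp x : ~ N x -> (f^\+ x = g^\+ x)%E by move=> Nx; rewrite ?funeposE ?funenegE fg.
have hn x : ~ N x -> (f^\- x = g^\- x)%E by move=> Nx; rewrite ?funeposE ?funenegE fg.
congr (_ - _)%E; apply/eqP; rewrite eq_le; apply/andP; split.
- apply: (@ae_le_nm _ _ _ mu N (f^\+)%E (g^\+)%E) => // x Nx; exact: hp.
- apply: (@ae_le_nm _ _ _ mu N (g^\+)%E (f^\+)%E) => // x Nx; exact/esym/hp.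
- apply: (@ae_le_nm _ _ _ mu N (f^\-)%E (g^\-)%E) => // x Nx; exact: hn.
- apply: (@ae_le_nm _ _ _ mu N (g^\-)%E (f^\-)%E) => // x Nx; exact/esym/hn.
Qed.

Lemma ae_Req_nm d (T : measurableType d) (R : realType) (mu : {measure set T -> \bar R})
  (N : set T) (f g : T -> R) : measurable N -> mu N = 0%E ->
  (forall x, ~ N x -> f x = g x) -> \int[mu]_x f x = \int[mu]_x g x.
Proof.
move=> mN muN fg; rewrite /Rintegral; congr fine.
by apply: (ae_eq_nm mN muN) => x Nx; rewrite fg.
Qed.

Lemma kappa_props (R : realType) (k : probability R R) (rmax : R) :
  0 <= rmax -> k `[0, rmax]%classic = 1%E ->
  k.-integrable setT EFin /\ `|\int[k]_(r in [set: R]) r| <= rmax.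
Proof.
move=> r0 k1.
have mI : measurable (`[0, rmax]%classic : set R) by exact: measurable_itv.
have kC : k (~` `[0, rmax]%classic) = 0%E.
  by rewrite probability_setC // k1 subee.
have mE : measurable_fun [set: R] (@EFin R) by [].
have bnd : (\int[k]_(x in [set: R]) `|(x%:E)| <= rmax%:E)%E.
  have := @integral_le_bound _ _ _ k setT EFin rmax%:E measurableT mE.
  move=> H; apply: le_trans (H _ _) _ => //.
  - exists (~` `[0, rmax]%classic); split => //; first exact: measurableC.
    move=> x /= /not_implyP [_]; apply: contra_not => /=.
    rewrite in_itv /= => /andP[x0 xr]; rewrite lee_fin ger0_norm //.
  - rewrite -[leRHS]mule1; apply: lee_pmul => //; exact: probability_le1.
have ik : k.-integrable setT EFin.
  by apply/integrableP; split => //; apply: le_lt_trans bnd _; exact: ltry.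
split => //.
apply: le_trans (le_normr_Rintegral _ _) _ => //.
rewrite /Rintegral -lee_fin fineK; first exact: bnd.
rewrite ge0_fin_numE; first by apply: le_lt_trans bnd _; exact: ltry.
exact: integral_ge0.
Qed.

Lemma kappa_lin (R : realType) (k : probability R R) (u v : R) :
  k.-integrable setT EFin ->
  \int[k]_(r in [set: R]) (u * r + v) = u * \int[k]_(r in [set: R]) r + v.
Proof.
move=> ik.
rewrite RintegralD //; last exact: (finite_measure_integrable_cst k v measurableT).
- rewrite RintegralZl // Rintegral_cst //; congr (_ + _).
  rewrite -[RHS]mulr1; congr (_ * _); exact: (congr1 fine (probability_setT k)).
- apply: (eq_integrable _ (fun r => (u%:E * r%:E)%E)) => //.
  exact: integrableZl.
Qed.

Definition sndf (R : realType) (dX : measure_display) (Xs : measurableType dX) : (Xs * R)%type -> R := snd.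
HB.instance Definition _ (R : realType) (dX : measure_display) (Xs : measurableType dX) :=
  isMeasurableFun.Build _ _ _ _ (@sndf R dX Xs) (@measurable_snd _ _ Xs R).

Lemma bnd_int d (T : measurableType d) (R : realType) (mu : probability T R)
  (h : T -> R) (M : R) : measurable_fun setT h -> (forall x, `|h x| <= M) ->
  mu.-integrable setT (EFin \o h).
Proof.
move=> mh hM.
have hb : [bounded h x | x in [set: T]].
  exists M; split; first exact: num_real.
  by move=> y My x _; apply: le_trans (hM x) (ltW My).
have := @integrableMr _ _ _ mu setT measurableT h (EFin \o cst 1) mh hb
  (finite_measure_integrable_cst mu 1 measurableT).
move=> H; apply: eq_integrable H => //.
by move=> x _ /=; rewrite mule1.
Qed.

Lemma sep (R : realType) (dX : measure_display) (Xs : measurableType dX)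
  (pxt : probability (Xs * R)%type R) (pxt' : probability Xs R)
  (hstat : forall (B : set Xs) (C : set R), measurable B -> measurable C ->
      pxt (B `*` C) = (pxt (B `*` setT) * pxt (setT `*` C))%E)
  (hstat' : forall B : set Xs, measurable B -> pxt' B = pxt (B `*` setT))
  (h : Xs -> R) (g : R -> R) (M : R) :
  pxt'.-integrable setT (EFin \o h) -> measurable_fun setT g ->
  (forall t, `|g t| <= M) ->
  pxt.-integrable setT (fun xt => (h xt.1 * g xt.2)%:E) /\
  \int[pxt]_(xt in setT) (h xt.1 * g xt.2) =
    \int[pxt']_(x in setT) h x * \int[pxt]_(xt in setT) g xt.2.
Proof.
move=> ih mg gM.
have mEg : measurable_fun setT (EFin \o g) by apply/measurable_EFinP.
have mh : measurable_fun setT h by apply/measurable_EFinP; case/integrableP: ih.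
pose nu := distribution pxt (@sndf R dX Xs).
pose P := (pxt' \x nu)%E.
have PE X : measurable X -> P X = pxt X.
  apply: product_measure_unique => A B mA mB.
  apply: (eq_trans (hstat A B mA mB)); rewrite -(hstat' A mA); congr (_ * _)%E.
  rewrite /nu /distribution /pushforward; congr (pxt _).
  by apply/seteqP; split => -[x t] //=; move=> [].
have eqI f : (\int[pxt]_(z in setT) f z = \int[P]_(z in setT) f z)%E.
  by apply: (eq_measure_integral P) => A mA _; exact/esym/PE.
pose F z := (h z.1 * g z.2)%:E.
have mF : measurable_fun setT F.
  apply/measurable_EFinP; apply: measurable_funM.
    exact: measurableT_comp mh measurable_fst.
  exact: measurableT_comp mg measurable_snd.
have iPh : P.-integrable setT (fun z => (h z.1)%:E).
  apply/integrableP; split.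
    by apply/measurable_EFinP; exact: measurableT_comp mh measurable_fst.
  rewrite (@fubini_tonelli1 _ _ _ _ _ pxt' nu (fun z => `|(h z.1)%:E|)%E); last 2 first.
  - apply: measurableT_comp => //; apply/measurable_EFinP.
    exact: measurableT_comp mh measurable_fst.
  - by move=> z.
  rewrite /fubini_F /=.
  under eq_integral do rewrite integral_cst //= probability_setT mule1.
  by case/integrableP: ih.
have iPF : P.-integrable setT F.
  have hb : [bounded (g \o snd) z | z in [set: (Xs * R)%type]].
    exists M; split; first exact: num_real.
    by move=> y My x _; apply: le_trans (gM _) (ltW My).
  have := @integrableMr _ _ _ P setT measurableT (g \o snd) _ 
    (measurableT_comp mg measurable_snd) hb iPh.
  move=> H; apply: eq_integrable H => // z _ /=.
  by rewrite /F -EFinM mulrC.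
have ipF : pxt.-integrable setT F.
  apply/integrableP; split => //; rewrite eqI.
  by case/integrableP: iPF.
split => //.
have ig : nu.-integrable setT (EFin \o g) by exact: bnd_int mg gM.
have ig2 : pxt.-integrable setT (EFin \o (g \o snd)).
  apply: (@bnd_int _ _ _ pxt (g \o snd) M).
  - exact: measurableT_comp mg measurable_snd.
  - by move=> z; exact: gM.
have inner x : (\int[nu]_(y in setT) (h x * g y)%:E = (h x)%:E * \int[nu]_(y in setT) (g y)%:E)%E.
  under eq_integral do rewrite EFinM.
  exact: integralZl.
have cfin : (\int[nu]_(y in setT) (g y)%:E)%E \is a fin_num by exact: integrable_fin_num.
have cE : (\int[nu]_(y in setT) (g y)%:E = \int[pxt]_(z in setT) (g z.2)%:E)%E.
  apply: (@integral_distribution _ _ _ _ _ pxt (@sndf R dX Xs) (EFin \o g) mEg).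
  exact: ig2.
rewrite /Rintegral -/F eqI -(integral12_prod_meas1 iPF) /fubini_F /F /=.
under eq_integral do rewrite inner.
rewrite -(fineK cfin) integralZr //= -cE fineM //; last exact: integrable_fin_num.
Qed.

Lemma RintD d (T : measurableType d) (R : realType) (mu : {measure set T -> \bar R}) (f g : T -> R) :
  mu.-integrable setT (fun x => (f x)%:E) -> mu.-integrable setT (fun x => (g x)%:E) ->
  mu.-integrable setT (fun x => (f x + g x)%:E).
Proof.
move=> i1 i2; have := integrableD measurableT i1 i2.
by apply: eq_integrable => // x _; rewrite EFinD.
Qed.

Lemma RintB d (T : measurableType d) (R : realType) (mu : {measure set T -> \bar R}) (f g : T -> R) :
  mu.-integrable setT (fun x => (f x)%:E) -> mu.-integrable setT (fun x => (g x)%:E) ->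
  mu.-integrable setT (fun x => (f x - g x)%:E).
Proof.
move=> i1 i2; have := integrableB measurableT i1 i2.
by apply: eq_integrable => // x _; rewrite EFinB.
Qed.

Lemma Rintsum d (T : measurableType d) (R : realType) (mu : {measure set T -> \bar R})
  (I : finType) (F : I -> T -> R) :
  (forall i, mu.-integrable setT (fun x => (F i x)%:E)) ->
  mu.-integrable setT (fun x => (\sum_(i : I) F i x)%:E).
Proof.
move=> iF; have := @integrable_sum _ _ _ mu setT measurableT I (index_enum I) predT
  (fun i x => (F i x)%:E) (fun i _ => iF i).
by apply: eq_integrable => // x _; rewrite sumEFin.
Qed.

Lemma RintMl d (T : measurableType d) (R : realType) (mu : {measure set T -> \bar R})
  (f h : T -> R) (M : R) :
  mu.-integrable setT (fun x => (f x)%:E) -> measurable_fun setT h ->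
  (forall x, `|h x| <= M) -> mu.-integrable setT (fun x => (h x * f x)%:E).
Proof.
move=> i1 mh hM.
have hb : [bounded h x | x in [set: T]].
  exists M; split; first exact: num_real.
  by move=> y My x _; apply: le_trans (hM x) (ltW My).
have := @integrableMr _ _ _ mu setT measurableT h _ mh hb i1.
by apply: eq_integrable => // x _; rewrite /= EFinM.
Qed.

Lemma E_data_size (R : realType) (dX : measure_display) (Xs : measurableType dX) (A : finType)
  (pxt : probability (Xs * R)%type R) (pi0 : Xs -> R -> A -> R)
  (kappa : Xs -> R -> A -> probability R R) (m : nat) (G G' : seq (@sample R dX Xs A) -> R) :
  (forall D, size D = m -> G D = G' D) ->
  E_data pxt pi0 kappa m G = E_data pxt pi0 kappa m G'.
Proof.
elim: m G G' => [|m IH] G G' hG /=; first exact: hG.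
congr (E_sample _ _ _ _); apply: funext => s; apply: IH => D hD.
by apply: hG; rewrite /= hD.
Qed.

Lemma E_data_lin (R : realType) (dX : measure_display) (Xs : measurableType dX) (A : finType)
  (pxt : probability (Xs * R)%type R) (pi0 : Xs -> R -> A -> R)
  (kappa : Xs -> R -> A -> probability R R) (term : @sample R dX Xs A -> R) (mu : R) :
  (forall k c, E_sample pxt pi0 kappa (fun s => k * (c + term s)) = k * (c + mu)) ->
  forall m k c, E_data pxt pi0 kappa m (fun D => k * (c + \sum_(s <- D) term s))
     = k * (c + m%:R * mu).
Proof.
move=> hE; elim=> [|m IH] k c /=; first by rewrite big_nil mul0r.
rewrite (_ : (fun s => _) = (fun s => k * ((c + m%:R * mu) + term s))).
  by rewrite hE; congr (_ * _); rewrite -addrA -[m.+1]addn1 natrD; ring.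
apply: funext => s; rewrite (_ : (fun D => _) = (fun D => k * ((c + term s) + \sum_(s0 <- D) term s0))).
  by rewrite IH; congr (_ * _); ring.
by apply: funext => D; rewrite big_cons addrA.
Qed.

Unset Implicit Arguments.
Theorem theorem3p3
  (R : realType) (dX : measure_display) (Xs : measurableType dX)
  (A : finType) (L : eqType)
  (T rmax t' : R) (n : nat)
  (pxt : probability (Xs * R)%type R)     (* joint law p(x,t) of logged contexts/times *)
  (pt : R -> R)                           (* marginal density p(t) of t *)
  (pxt' : probability Xs R)               (* p(x | t') at the target time *)
  (pi0 pie : Xs -> R -> A -> R)           (* logging / evaluation policies *)
  (kappa : Xs -> R -> A -> probability R R) (* reward distributions p(r|x,t,a) *)
  (phi : R -> L)                          (* time feature function *)
  (fhat : Xs -> R -> A -> R)              (* fixed reward regressor *)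
  (* setting *)
  (hT : 0 < T) (ht' : T < t') (hrmax : 0 <= rmax) (hn : (0 < n)%N)
  (hpt_meas : measurable_fun [set: R] pt)
  (hpt_ge0 : forall s, 0 <= pt s)
  (hpt_supp : forall s, (s < 0 \/ T < s) -> pt s = 0)
  (hpt_dens : forall B : set R, measurable B ->
      pxt (setT `*` B) = (\int[lebesgue_measure]_(s in B) (pt s)%:E)%E)
  (hpi0_ge0 : forall x t a, 0 <= pi0 x t a)
  (hpi0_sum : forall x t, \sum_(a : A) pi0 x t a = 1)
  (hpie_ge0 : forall x t a, 0 <= pie x t a)
  (hpie_sum : forall x t, \sum_(a : A) pie x t a = 1)
  (hpi0_meas : forall a, measurable_fun [set: (Xs * R)%type]
                          (fun xt => pi0 xt.1 xt.2 a))
  (hpie_meas : forall a, measurable_fun [set: Xs] (fun x => pie x t' a))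
  (hkappa_supp : forall x t a, 0 <= t -> kappa x t a `[0, rmax]%classic = 1%E)
  (hq_meas : forall a, measurable_fun [set: (Xs * R)%type]
                        (fun xt => qmean kappa xt.1 xt.2 a))
  (hq'_meas : forall a, measurable_fun [set: Xs] (fun x => qmean kappa x t' a))
  (hphi_meas : measurable [set s : R | phi s = phi t'])
  (hfhat_int : forall a, pxt.-integrable [set: (Xs * R)%type]
                          (fun xt => (fhat xt.1 xt.2 a)%:E))
  (hfhat'_int : forall a, pxt'.-integrable [set: Xs] (fun x => (fhat x t' a)%:E))
  (* stationarity: p(x,t) = p(x) p(t) and p(x | t') = p(x) *)
  (hstat : forall (B : set Xs) (C : set R), measurable B -> measurable C ->
      pxt (B `*` C) = (pxt (B `*` setT) * pxt (setT `*` C))%E)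
  (hstat' : forall B : set Xs, measurable B -> pxt' B = pxt (B `*` setT))
  (* common support *)
  (hsupp : forall x t a, 0 <= t <= T -> 0 < pie x t' a -> 0 < pi0 x t a)
  (* p(phi(t')) > 0 *)
  (hpphi : 0 < pphi pt T phi t') :
  E_data pxt pi0 kappa n (V_opfv pt T phi t' pi0 pie fhat) - V_true pxt' pie kappa t'
  = \int[pxt]_(xt in [set: (Xs * R)%type])
      (\sum_(a : A) pie xt.1 t' a *
         (Iphi phi xt.2 t' / pphi pt T phi t' *
           ((qmean kappa xt.1 xt.2 a - qmean kappa xt.1 t' a)
            - (fhat xt.1 xt.2 a - fhat xt.1 t' a)))).
Proof.
have mI : measurable (`[0, T]%classic : set R) by exact: measurable_itv.
set Phi := [set s : R | phi s = phi t'].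
have IE t : Iphi phi t t' = \1_Phi t.
  rewrite /Iphi indicE; have [e|ne] := eqVneq (phi t) (phi t').
    by rewrite mem_set.
  by rewrite memNset //; apply/eqP.
have mIphi : measurable_fun setT (fun t => Iphi phi t t').
  rewrite (_ : (fun t => _) = \1_Phi); last by apply: funext => t; rewrite IE.
  exact: measurable_indic.
have Iabs t : `|Iphi phi t t'| <= 1.
  by rewrite /Iphi; case: (_ == _); rewrite ?normr1 ?normr0.
set p := pphi pt T phi t'.
have p0 : p != 0 by rewrite gt_eqF.
have pie_abs x t a : `|pie x t a| <= 1.
  rewrite ger0_norm // -(hpie_sum x t) (bigD1 a) //= lerDl.
  by apply: sumr_ge0 => b _.
have kap x t a : 0 <= t ->
    (kappa x t a).-integrable setT EFin /\ `|qmean kappa x t a| <= rmax.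
  by move=> t0; apply: kappa_props => //; exact: hkappa_supp.
have t'0 : 0 <= t' by apply: ltW; apply: lt_trans hT ht'.
set J := (\1_(`[0, T]%classic) : R -> R).
have Jin t : 0 <= t <= T -> J t = 1.
  by move=> tT; rewrite /J indicE mem_set //= in_itv /= tT.
set qt := fun x t a => qmean kappa x t a * J t.
have qt_bnd x t a : `|qt x t a| <= rmax.
  rewrite /qt /J indicE; case: (boolP (t \in _)) => ht.
    rewrite mulr1; apply: (kap x t a _).2.
    by move: ht; rewrite inE /= in_itv /= => /andP[].
  by rewrite mulr0 normr0.
have mqt a : measurable_fun setT (fun xt : (Xs * R)%type => qt xt.1 xt.2 a).
  apply: measurable_funM; first exact: hq_meas.
  apply: measurableT_comp; [exact: measurable_indic | exact: measurable_snd].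
set beta := fun x => \sum_(b : A) pie x t' b * fhat x t' b.
set W := fun x => \sum_(b : A) pie x t' b * (qmean kappa x t' b - fhat x t' b).
set Z := fun xt : (Xs * R)%type => beta xt.1 + \sum_(a : A)
  Iphi phi xt.2 t' / p * pie xt.1 t' a * (qt xt.1 xt.2 a - fhat xt.1 xt.2 a).
have ibeta' : pxt'.-integrable setT (fun x => (beta x)%:E).
  apply: Rintsum => b; apply: (RintMl (M := 1));
    [exact: hfhat'_int | exact: hpie_meas | move=> x; exact: pie_abs].
have iW' : pxt'.-integrable setT (fun x => (W x)%:E).
  apply: Rintsum => b; apply: (RintMl (M := 1));
    [|exact: hpie_meas | move=> x; exact: pie_abs].
  apply: RintB; last exact: hfhat'_int.
  apply: (@bnd_int _ _ _ pxt' _ rmax); first exact: hq'_meas.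
  by move=> x; apply: (kap x t' b t'0).2.
have [ibeta sbeta] := sep hstat hstat' (g := fun _ => 1) (M := 1) ibeta'
  (measurable_cst _) (fun t => ltac:(by rewrite normr1)).
have Ipabs t : `|Iphi phi t t' / p| <= p^-1.
  have pinv0 : 0 <= p^-1 by rewrite invr_ge0 ltW.
  rewrite normrM (ger0_norm pinv0) -[leRHS]mul1r ler_wpM2r //.
have mIp : measurable_fun setT (fun t => Iphi phi t t' / p).
  by apply: measurable_funM => //; exact: measurable_cst.
have [iIW sIW] := sep hstat hstat' (h := W) (g := fun t => Iphi phi t t' / p)
  (M := p^-1) iW' mIp Ipabs.
have iZ : pxt.-integrable setT (fun xt => (Z xt)%:E).
  apply: RintD.
    move: ibeta; apply: eq_integrable => // xt _; by rewrite mulr1.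
  apply: Rintsum => a; apply: (RintMl (M := p^-1)).
  - apply: RintB; last exact: hfhat_int.
    apply: (@bnd_int _ _ _ pxt _ rmax); first exact: mqt.
    by move=> xt; exact: qt_bnd.
  - apply: measurable_funM.
      exact: measurableT_comp mIp measurable_snd.
    exact: measurableT_comp (hpie_meas a) measurable_fst.
  - move=> xt; rewrite normrM -[leRHS]mulr1 ler_pM //; exact: pie_abs.
set N := [set: Xs] `*` ~` (`[0, T]%classic : set R).
have mN : measurable N by apply: measurableX => //; exact: measurableC.
have pN : pxt N = 0%E.
  apply: eq_trans (hpt_dens _ (measurableC mI)) _.
  apply: integral0_eq => s /= hs; rewrite hpt_supp //.
  case: (leP 0 s) => s0; last by left.
  right; rewrite ltNge; apply/negP => sT; apply: hs.
  by rewrite /= in_itv /= s0 sT.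
have notN x t : ~ N (x, t) -> 0 <= t <= T.
  move=> h; apply: contrapT => H; apply: h; split => //=.
have cst_int (c : R) : pxt.-integrable setT (fun _ => c%:E).
  exact: (finite_measure_integrable_cst pxt c measurableT).
have pxtT : fine (pxt setT) = 1 by exact: (congr1 fine (probability_setT pxt)).
have Rcst (c : R) : \int[pxt]_(_ in setT) c = c.
  by rewrite Rintegral_cst // pxtT mulr1.
have key k c : E_sample pxt pi0 kappa
    (fun s => k * (c + opfv_term pt T phi t' pi0 pie fhat s)) =
    k * (c + \int[pxt]_(xt in setT) Z xt).
  rewrite /E_sample; transitivity (\int[pxt]_(xt in setT) (k * (c + Z xt))).
    apply: (ae_Req_nm mN pN).
    2: { rewrite RintegralZl //; last exact: RintD.
         rewrite RintegralD //; last exact: cst_int.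
         by rewrite Rcst. }
  move=> [x t] /notN tT /=.
  rewrite (eq_bigr (fun a => k * (c + beta x) * pi0 x t a +
      k * (Iphi phi t t' / p * pie x t' a * (qt x t a - fhat x t a)))); last first.
    move=> a _.
    set u := pie x t' a / pi0 x t a.
    rewrite (_ : (fun r => _) = (fun r => (k * (Iphi phi t t' / p * u)) * r +
        k * (c + beta x - Iphi phi t t' / p * u * fhat x t a))); last first.
      by apply: funext => r /=; rewrite /opfv_term /beta /u /=; ring.
    rewrite kappa_lin; last by apply: (kap x t a _).1; case/andP: tT.
    have pu : pi0 x t a * u = pie x t' a.
      rewrite /u; have [e|n0] := eqVneq (pi0 x t a) 0.
        rewrite e mul0r; apply/esym; apply/eqP; rewrite eq_le hpie_ge0 andbT.
        rewrite leNgt; apply/negP => /(hsupp x t a tT); by rewrite e ltxx.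
      by rewrite mulrCA mulfV // mulr1.
    rewrite /qt Jin // mulr1.
    transitivity (k * (c + beta x) * pi0 x t a +
      k * (Iphi phi t t' / p * (pi0 x t a * u) * (qmean kappa x t a - fhat x t a))).
      by rewrite /qmean; ring.
    by rewrite pu.
  rewrite big_split /= -mulr_sumr hpi0_sum -mulr_sumr /Z /=; ring.
have Edata : E_data pxt pi0 kappa n (V_opfv pt T phi t' pi0 pie fhat) =
    \int[pxt]_(xt in setT) Z xt.
  rewrite (@E_data_size _ _ _ _ pxt pi0 kappa n _
    (fun D => n%:R^-1 * (0 + \sum_(s <- D) opfv_term pt T phi t' pi0 pie fhat s))); last first.
    by move=> D hD; rewrite /V_opfv hD add0r.
  rewrite (E_data_lin key) add0r mulrA mulVf ?mul1r //.
  by rewrite pnatr_eq0 -lt0n hn.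
rewrite Edata.
have RHSE : \int[pxt]_(xt in setT) (\sum_(a : A) pie xt.1 t' a *
         (Iphi phi xt.2 t' / p *
           ((qmean kappa xt.1 xt.2 a - qmean kappa xt.1 t' a)
            - (fhat xt.1 xt.2 a - fhat xt.1 t' a)))) =
    \int[pxt]_(xt in setT) ((Z xt - beta xt.1 * 1) - W xt.1 * (Iphi phi xt.2 t' / p)).
  apply: (ae_Req_nm mN pN) => -[x t] /notN tT /=.
  rewrite /Z /W /= mulr1 (addrC (beta x)) addrK mulr_suml -sumrB.
  by apply: eq_bigr => a _; rewrite /qt Jin // mulr1; ring.
rewrite RHSE RintegralB //; last exact: RintB.
rewrite RintegralB // sbeta sIW Rcst mulr1.
have hIp : \int[pxt]_(xt in setT) (Iphi phi xt.2 t' / p) = 1.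
  have iI : pxt.-integrable setT (EFin \o (fun xt : (Xs * R)%type => Iphi phi xt.2 t')).
    apply: (@bnd_int _ _ _ pxt _ 1); last by move=> xt; exact: Iabs.
    exact: measurableT_comp mIphi measurable_snd.
  rewrite RintegralZr //.
  suff -> : \int[pxt]_(xt in setT) Iphi phi xt.2 t' = p by rewrite mulfV.
  have mP : measurable ([set: Xs] `*` Phi) by apply: measurableX.
  rewrite /Rintegral.
  rewrite (eq_integral (fun xt => (\1_([set: Xs] `*` Phi) xt)%:E)); last first.
    move=> [x t] _ /=; rewrite IE !indicE; congr ((nat_of_bool _)%:R)%:E.
    by apply/idP/idP => /set_mem H; apply/mem_set => //; case: H.
  rewrite integral_indic // setIT.
  apply: eq_trans (congr1 fine (hpt_dens Phi hphi_meas)) _.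
  rewrite /p /pphi /Rintegral; congr fine.
  rewrite [LHS]integral_mkcond [RHS]integral_mkcond; apply: eq_integral => s _.
  rewrite !patchE IE indicE.
  case: (boolP (s \in Phi)) => sP; case: (boolP (s \in _)) => sI //=.
  - by rewrite mulr1.
  - rewrite hpt_supp //.
    have : ~~ ((0 <= s) && (s <= T)).
      apply/negP => H; move/negP: sI; apply; apply/mem_set; by rewrite /= in_itv /=.
    by rewrite negb_and -!ltNge => /orP [h|h]; [left|right].
  - by rewrite mulr0.

rewrite hIp mulr1 /V_true.
rewrite (_ : (fun x => _) = (fun x => beta x + W x)); last first.
  apply: funext => x; rewrite /beta /W -big_split /=.
  by apply: eq_bigr => b _; ring.
have Vsplit : \int[pxt']_(x in setT) (beta x + W x) =
    \int[pxt']_(x in setT) beta x + \int[pxt']_(x in setT) W x.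
  exact: RintegralD.
rewrite Vsplit; ring.
Qed.
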